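(* Let $d_1\ge2$, let $\sigma_X,\sigma_Y\in\mathbb R^{d_1}$ be linearly independent, $k_0>0$, $k_1\in\mathbb R$, $b\in\mathbb R$ with $b\ne k_1/k_0$, $z\in\mathbb R\setminus\{0\}$, $\bar r_X\ge0$, and $[\underline c,\bar c]\subseteq[0,1]$. Then $$\inf\{\underline r_Y(z,c,b):p(z,c;\bar r_X)\ge0,\ c\in\mathbb R^{d_1},\ \|c\|\in[\underline c,\bar c],\ \|c\|<1\}$$ $$=\inf\{\underline r_Y(z,c,b):p(z,c;\bar r_X)\ge0,\ c\in\operatorname{span}\{\sigma_X,\sigma_Y\},\ \|c\|\in[\underline c,\bar c],\ \|c\|<1\}.$$
   Context: $\|\cdot\|$ Euclidean norm. $p(z,c;\bar r_X)=\bar r_X^2\|\sigma_X\sqrt{1-\|c\|^2}-zc\|^2-z^2$. For $\|c\|<1$, let $v(z,c,b)=z\sqrt{1-\|c\|^2}(\sigma_Y-b\sigma_X)-(k_1-bk_0)c$, and $\underline r_Y(z,c,b)=|k_1-bk_0|/\|v(z,c,b)\|$ if $v(z,c,b)\ne0$, $\underline r_Y(z,c,b)=+\infty$ if $v(z,c,b)=0$. (In the application, $\sigma_X=\operatorname{cov}(W_1,X)$, $\sigma_Y=\operatorname{cov}(W_1,Y)$, $k_0=\operatorname{var}(X^{\perp W_1})$, $k_1=\operatorname{cov}(Y^{\perp W_1},X^{\perp W_1})$.) *)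

(* Defs.v *)
From HB Require Import structures.
From mathcomp Require Import all_boot all_order all_algebra.
From mathcomp Require Import all_classical all_reals all_analysis.
Set Implicit Arguments. Unset Strict Implicit. Unset Printing Implicit Defensive.
Import Order.TTheory GRing.Theory Num.Theory.
Local Open Scope ring_scope.

Section Defs.
Variables (R : realType) (d : nat).

Definition dotv (u w : 'rV[R]_d) : R := \sum_(i < d) u 0 i * w 0 i.
Definition enorm (u : 'rV[R]_d) : R := Num.sqrt (dotv u u).

Definition pfun (sX : 'rV[R]_d) (z : R) (c : 'rV[R]_d) (rX : R) : R :=
  rX ^+ 2 * enorm (Num.sqrt (1 - enorm c ^+ 2) *: sX - z *: c) ^+ 2 - z ^+ 2.

Definition vfun (sX sY : 'rV[R]_d) (k0 k1 : R) (z : R) (c : 'rV[R]_d) (b : R)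
  : 'rV[R]_d :=
  (z * Num.sqrt (1 - enorm c ^+ 2)) *: (sY - b *: sX) - (k1 - b * k0) *: c.

Definition rYlow (sX sY : 'rV[R]_d) (k0 k1 : R) (z : R) (c : 'rV[R]_d) (b : R)
  : \bar R :=
  if vfun sX sY k0 k1 z c b == 0 then +oo%E
  else (`|k1 - b * k0| / enorm (vfun sX sY k0 k1 z c b))%:E.

End Defs.

(* Main.v *)
Require Import Defs.
From HB Require Import structures.
From mathcomp Require Import all_boot all_order all_algebra.
From mathcomp Require Import all_classical all_reals all_analysis.
From mathcomp Require Import ring lra.
Import Order.TTheory GRing.Theory Num.Theory.
Local Open Scope classical_set_scope.
Local Open Scope ring_scope.

Section Aux.
Variables (R : realType) (d : nat).
Implicit Types (u v w : 'rV[R]_d) (a : R).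

Lemma dotvC u v : dotv u v = dotv v u.
Proof. by apply: eq_bigr => i _; rewrite mulrC. Qed.
Lemma dotvDl u v w : dotv (u + v) w = dotv u w + dotv v w.
Proof. by rewrite /dotv -big_split; apply: eq_bigr => i _; rewrite mxE mulrDl. Qed.
Lemma dotvZl a u w : dotv (a *: u) w = a * dotv u w.
Proof. by rewrite /dotv mulr_sumr; apply: eq_bigr => i _; rewrite mxE mulrA. Qed.
Lemma dotvNl u w : dotv (- u) w = - dotv u w.
Proof. by rewrite -scaleN1r dotvZl mulN1r. Qed.
Lemma dotvBl u v w : dotv (u - v) w = dotv u w - dotv v w.
Proof. by rewrite dotvDl dotvNl. Qed.
Lemma dotvDr u v w : dotv w (u + v) = dotv w u + dotv w v.
Proof. by rewrite dotvC dotvDl !(dotvC w). Qed.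
Lemma dotvZr a u w : dotv w (a *: u) = a * dotv w u.
Proof. by rewrite dotvC dotvZl dotvC. Qed.
Lemma dotvBr u v w : dotv w (u - v) = dotv w u - dotv w v.
Proof. by rewrite dotvC dotvBl !(dotvC w). Qed.
Lemma dotvNr u w : dotv w (- u) = - dotv w u.
Proof. by rewrite dotvC dotvNl dotvC. Qed.
Lemma dotv0r u : dotv u 0 = 0.
Proof. by rewrite -(scale0r (0 : 'rV[R]_d)) dotvZr mul0r. Qed.
Lemma dotvv_ge0 u : 0 <= dotv u u.
Proof. by apply: sumr_ge0 => i _; rewrite -expr2 sqr_ge0. Qed.
Lemma dotvv_eq0 u : dotv u u = 0 -> u = 0.
Proof.
move=> h; apply/rowP => i; rewrite mxE.
have hge : forall j : 'I_d, predT j -> 0 <= u 0 j * u 0 j by move=> j _; rewrite -expr2 sqr_ge0.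
have := @psumr_eq0P R _ predT (fun i => u 0 i * u 0 i) hge h i isT.
by move/eqP; rewrite mulf_eq0 orbb => /eqP.
Qed.
Lemma enorm_sq u : enorm u ^+ 2 = dotv u u.
Proof. by rewrite /enorm sqr_sqrtr // dotvv_ge0. Qed.

Lemma CS u v : dotv u v ^+ 2 <= dotv u u * dotv v v.
Proof.
have [V0|Vn0] := eqVneq (dotv v v) 0.
  by rewrite (dotvv_eq0 _ V0) dotv0r expr0n /= mulr_ge0 // dotvv_ge0.
have Vp : 0 < dotv v v by rewrite lt_def Vn0 dotvv_ge0.
have := dotvv_ge0 (dotv v v *: u - dotv u v *: v).
rewrite !(dotvBl, dotvBr, dotvZl, dotvZr) (dotvC v u).
move=> h.
have : 0 <= dotv v v * (dotv u u * dotv v v - dotv u v ^+ 2).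
  by move: h; rewrite expr2; nra.
by rewrite pmulr_rge0 // subr_ge0.
Qed.
End Aux.
Arguments dotvC {R d}. Arguments dotvDl {R d}. Arguments dotvZl {R d}. Arguments dotvNl {R d}. Arguments dotvBl {R d}. Arguments dotvDr {R d}. Arguments dotvZr {R d}. Arguments dotvBr {R d}. Arguments dotvNr {R d}. Arguments dotv0r {R d}. Arguments dotvv_ge0 {R d}. Arguments dotvv_eq0 {R d}. Arguments enorm_sq {R d}. Arguments CS {R d}.

Section Constr.
Variables (R : realType) (d : nat).

Lemma construct (sX sY c : 'rV[R]_d) (e : R) : free [:: sX; sY] ->
  exists c', c' \in <<[:: sX; sY]>>%VS /\ dotv c' c' = dotv c c /\
    dotv sX c' = dotv sX c /\ e * dotv sY c' <= e * dotv sY c.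
Proof.
rewrite free_cons seq1_free => /andP [nX nY].
set X := dotv sX sX; set Y := dotv sY sY; set P := dotv sX sY.
set a := dotv sX c; set be := dotv sY c; set r2 := dotv c c.
have sX0 : sX != 0.
  by apply: contraNneq nX => ->; rewrite mem0v.
have Xp : 0 < X.
  rewrite lt_def dotvv_ge0 andbT; apply: contraNneq sX0 => h.
  by rewrite (dotvv_eq0 _ h).
have Yp : 0 < Y.
  rewrite lt_def dotvv_ge0 andbT; apply: contraNneq nY => h.
  by rewrite (dotvv_eq0 _ h).
set G := X * Y - P ^+ 2.
have Gp : 0 < G.
  have G0 : 0 <= G by rewrite subr_ge0 /P /X /Y CS.
  rewrite lt_def G0 andbT; apply/eqP => HG.
  have hw : dotv (Y *: sX - P *: sY) (Y *: sX - P *: sY) = 0.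
    rewrite !(dotvBl, dotvBr, dotvZl, dotvZr) (dotvC sY sX) -/X -/Y -/P.
    have -> : 0 = Y * G by rewrite HG mulr0.
    by rewrite /G; ring.
  move/dotvv_eq0: hw => /eqP; rewrite subr_eq0 => /eqP hw.
  have : sX = (P / Y) *: sY by rewrite mulrC -scalerA -hw scalerA mulVf ?scale1r // gt_eqF.
  move=> hx; move: nX; rewrite hx memvZ ?memv_span ?mem_head //.
set D := X * r2 - a ^+ 2.
have D0 : 0 <= D by rewrite subr_ge0 /a /X /r2 CS.
set u := X *: sY - P *: sX.
set t := X * be - P * a.
have gram : t ^+ 2 <= D * G.
  have := CS (X *: sY - P *: sX) (X *: c - a *: sX).
  rewrite !(dotvBl, dotvBr, dotvZl, dotvZr) ?(dotvC sY sX) ?(dotvC c sX) ?(dotvC c sY)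
     -/X -/Y -/P -/a -/be -/r2.
  move=> h.
  have : X ^+ 2 * t ^+ 2 <= X ^+ 2 * (D * G).
    move: h; rewrite /t /D /G.
    have -> : (X * (X * be - a * P) - P * (X * a - a * X)) ^+ 2 =
       X ^+ 2 * (X * be - P * a) ^+ 2 by ring.
    have -> : (X * (X * Y - P * P) - P * (X * P - P * X)) *
      (X * (X * r2 - a * a) - a * (X * a - a * X)) =
      X ^+ 2 * ((X * r2 - a ^+ 2) * (X * Y - P ^+ 2)) by ring.
    by [].
  by rewrite ler_pM2l // exprn_gt0.
set q := Num.sqrt (D * G).
have q0 : 0 <= q by rewrite sqrtr_ge0.
have q2 : q ^+ 2 = D * G by rewrite sqr_sqrtr // mulr_ge0 // ltW.
have tq : `|t| <= q by rewrite -sqrtr_sqr ler_wsqrtr.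
move: tq; rewrite ler_norml => /andP [tq1 tq2].
have Xn0 : X != 0 by rewrite gt_eqF.
have Gn0 : X * Y - P ^+ 2 != 0 by rewrite gt_eqF.
have key : forall s, s ^+ 2 = 1 -> e * (s * q - t) <= 0 ->
  exists c' : 'rV[R]_d, c' \in <<[:: sX; sY]>>%VS /\ dotv c' c' = r2 /\
    dotv sX c' = a /\ e * dotv sY c' <= e * be.
  move=> s s2 hs.
  exists ((a / X) *: sX + (s * q / (X * G)) *: u); split.
    apply: rpredD; apply: rpredZ; first by apply: memv_span; rewrite !inE eqxx.
    by rewrite /u rpredB // rpredZ // memv_span // !inE eqxx ?orbT.
  have hr : r2 = (s ^+ 2 * q ^+ 2 / G + a ^+ 2) / X.
    by rewrite s2 q2 mul1r mulfK ?gt_eqF // /D addrNK mulrC mulKf.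
  rewrite /u !(dotvDl, dotvDr, dotvBl, dotvBr, dotvNl, dotvNr, dotvZl, dotvZr)
    ?(dotvC sY sX) ?(dotvC c sX) ?(dotvC c sY) -/X -/Y -/P -/a -/be.
  split; first by rewrite hr /G; field; rewrite ?Xn0 ?Gn0.
  split; first by rewrite /G; field; rewrite ?Xn0 ?Gn0.
  have hy : X * ((a / X) * P + s * q / (X * G) * (X * Y - P * P)) = a * P + s * q.
    by rewrite /G; field; rewrite ?Xn0 ?Gn0.
  move: hy hs; rewrite /t.
  set y := (a / X) * P + _.
  move=> hy hs.
  rewrite -(ler_pM2l Xp).
  have -> : X * (e * y) = e * (X * y) by ring.
  rewrite hy; nra.
have [e0|e0] := leP 0 e.
  apply: (key (-1)); first by rewrite sqrrN expr1n.
  rewrite mulN1r; apply: mulr_ge0_le0 => //; lra.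
apply: (key 1); first by rewrite expr1n.
rewrite mul1r; apply: mulr_le0_ge0; [exact: ltW | lra].
Qed.
End Constr.
Arguments construct {R d sX sY}.

Section Main.
Variables (R : realType) (d : nat).
Implicit Types (c : 'rV[R]_d).

Lemma enorm_eq c c' : dotv c' c' = dotv c c -> enorm c' = enorm c.
Proof. by rewrite /enorm => ->. Qed.
Arguments enorm_eq {c c'}.

Lemma pfun_eq (sX : 'rV[R]_d) z rX c c' : dotv c' c' = dotv c c ->
  dotv sX c' = dotv sX c -> pfun sX z c' rX = pfun sX z c rX.
Proof.
move=> h1 h2; rewrite /pfun (enorm_eq h1) !enorm_sq.
rewrite !(dotvDl, dotvDr, dotvBl, dotvBr, dotvNl, dotvNr, dotvZl, dotvZr).
by rewrite (dotvC c sX) (dotvC c' sX) h1 h2.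
Qed.

Lemma vfun_le (sX sY : 'rV[R]_d) k0 k1 z b c c' :
  dotv c' c' = dotv c c -> dotv sX c' = dotv sX c ->
  (z * Num.sqrt (1 - enorm c ^+ 2) * (k1 - b * k0)) * dotv sY c' <=
  (z * Num.sqrt (1 - enorm c ^+ 2) * (k1 - b * k0)) * dotv sY c ->
  dotv (vfun sX sY k0 k1 z c b) (vfun sX sY k0 k1 z c b) <=
  dotv (vfun sX sY k0 k1 z c' b) (vfun sX sY k0 k1 z c' b).
Proof.
move=> h1 h2 he; rewrite /vfun (enorm_eq h1).
move: he; set s := Num.sqrt _; set K := k1 - b * k0 => he.
rewrite !(dotvDl, dotvDr, dotvBl, dotvBr, dotvNl, dotvNr, dotvZl, dotvZr).
rewrite (dotvC c sX) (dotvC c' sX) (dotvC c sY) (dotvC c' sY) h1 h2.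
nra.
Qed.

Lemma rYlow_le (sX sY : 'rV[R]_d) k0 k1 z b c c' :
  dotv (vfun sX sY k0 k1 z c b) (vfun sX sY k0 k1 z c b) <=
  dotv (vfun sX sY k0 k1 z c' b) (vfun sX sY k0 k1 z c' b) ->
  (rYlow sX sY k0 k1 z c' b <= rYlow sX sY k0 k1 z c b)%E.
Proof.
rewrite /rYlow /enorm; set v := vfun _ _ _ _ _ c b; set v' := vfun _ _ _ _ _ c' b.
move=> hle.
have [v0|vn0] := eqVneq v 0; first by rewrite leey.
have vp : 0 < dotv v v.
  rewrite lt_def dotvv_ge0 andbT; apply: contraNneq vn0 => h.
  by rewrite (dotvv_eq0 _ h).
have vp' : 0 < dotv v' v' by apply: lt_le_trans hle.
have -> : (v' == 0) = false.
  apply/negbTE; apply: contraTneq vp' => ->.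
  by rewrite dotv0r ltxx.
rewrite lee_fin ler_wpM2l // lef_pV2 ?posrE ?sqrtr_gt0 //.
by rewrite ler_wsqrtr.
Qed.
End Main.
Arguments pfun_eq {R d sX z rX c c'}. Arguments vfun_le {R d sX sY k0 k1 z b c c'}. Arguments rYlow_le {R d sX sY k0 k1 z b c c'}. Arguments enorm_eq {R d c c'}.

Theorem mainTheorem16 (R : realType) (d : nat) (sX sY : 'rV[R]_d)
  (k0 k1 b z rX cl cu : R) :
  (2 <= d)%N ->
  free [:: sX; sY] ->
  0 < k0 ->
  b != k1 / k0 ->
  z != 0 ->
  0 <= rX ->
  (forall x : R, cl <= x <= cu -> 0 <= x <= 1) ->
  ereal_inf [set rYlow sX sY k0 k1 z c b | c in
     [set c : 'rV[R]_d | 0 <= pfun sX z c rX /\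
        cl <= enorm c <= cu /\ enorm c < 1]]
  = ereal_inf [set rYlow sX sY k0 k1 z c b | c in
     [set c : 'rV[R]_d | 0 <= pfun sX z c rX /\
        c \in <<[:: sX; sY]>>%VS /\
        cl <= enorm c <= cu /\ enorm c < 1]].
Proof.
move=> _ hfree _ _ _ _ _.
apply/eqP; rewrite eq_le; apply/andP; split.
  apply: ereal_inf_le_tmp => y [c [h1 [h2 h3]] <-].
  by exists c.
apply: le_ereal_inf_tmp => y [c [hp [hc hn]] <-].
have [c' [hs [h1 [h2 h3]]]] :=
  construct c (z * Num.sqrt (1 - enorm c ^+ 2) * (k1 - b * k0)) hfree.
apply: (@le_trans _ _ (rYlow sX sY k0 k1 z c' b)).
  apply: ereal_inf_lbound; exists c' => //.
  rewrite /= (pfun_eq h1 h2) (enorm_eq h1); split => //.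
by apply: (rYlow_le (vfun_le h1 h2 h3)).
Qed.
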